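(* For any formula $\phi$ of $\mathsf{BSML}$, if $\phi$ has the empty state property (i.e., $M,\emptyset\models\phi$ for every model $M$), then $\phi$ is downward closed (i.e., $M,s\models\phi$ and $t\subseteq s$ imply $M,t\models\phi$).
   Context: Formulas of $\mathsf{BSML}$: $\phi ::= p \mid \neg\phi \mid (\phi\wedge\phi) \mid (\phi\vee\phi) \mid \Diamond\phi \mid \mathrm{NE}$. Models $M=(W,R,V)$ are Kripke models; states are subsets $s\subseteq W$; $R[w]=\{v:wRv\}$. Support/anti-support: $s\models p$ iff $s\subseteq V(p)$; $s\dashv p$ iff $s\cap V(p)=\emptyset$; $s\models\mathrm{NE}$ iff $s\ne\emptyset$; $s\dashv\mathrm{NE}$ iff $s=\emptyset$; $s\models\neg\phi$ iff $s\dashv\phi$; $s\dashv\neg\phi$ iff $s\models\phi$; $s\models\phi\wedge\psi$ iff both; $s\dashv\phi\wedge\psi$ iff $s=t\cup u$ with $t\dashv\phi$, $u\dashv\psi$; $s\models\phi\vee\psi$ iff $s=t\cup u$ with $t\models\phi$, $u\models\psi$; $s\dashv\phi\vee\psi$ iff $s\dashv\phi$ and $s\dashv\psi$; $s\models\Diamond\phi$ iff each $w\in s$ has a nonempty $t\subseteq R[w]$ with $t\models\phi$; $s\dashv\Diamond\phi$ iff $R[w]\dashv\phi$ for all $w\in s$. *)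

(* Defs.v *)
Inductive form : Type :=
  | Atom : nat -> form
  | Neg : form -> form
  | Conj : form -> form -> form
  | Disj : form -> form -> form
  | Dia : form -> form
  | NE : form.

Record model : Type := Model {
  world : Type;
  rel : world -> world -> Prop;
  val : nat -> world -> Prop
}.

Definition state (M : model) : Type := world M -> Prop.

Definition subset {M : model} (t s : state M) : Prop := forall w, t w -> s w.
Definition is_union {M : model} (s t u : state M) : Prop :=
  forall w, s w <-> (t w \/ u w).
Definition empty_state (M : model) : state M := fun _ => False.
Definition succ {M : model} (w : world M) : state M := fun v => rel M w v.

Fixpoint supp (M : model) (s : state M) (f : form) {struct f} : Prop :=
  match f with
  | Atom p => forall w, s w -> val M p w
  | Neg g => anti M s g
  | Conj g h => supp M s g /\ supp M s h
  | Disj g h => exists t u : state M, is_union s t u /\ supp M t g /\ supp M u h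
  | Dia g => forall w, s w ->
      exists t : state M, (exists v, t v) /\ subset t (succ w) /\ supp M t g
  | NE => exists w, s w
  end
with anti (M : model) (s : state M) (f : form) {struct f} : Prop :=
  match f with
  | Atom p => forall w, s w -> ~ val M p w
  | Neg g => supp M s g
  | Conj g h => exists t u : state M, is_union s t u /\ anti M t g /\ anti M u h
  | Disj g h => anti M s g /\ anti M s h
  | Dia g => forall w, s w -> anti M (succ w) g
  | NE => forall w, ~ s w
  end.

Definition empty_state_property (f : form) : Prop :=
  forall M : model, supp M (empty_state M) f.

Definition downward_closed (f : form) : Prop :=
  forall (M : model) (s t : state M), supp M s f -> subset t s -> supp M t f.

(* Main.v *)
Require Import Defs.

Lemma union_closed (f : form) : forall (M : model),
  (forall s t u : state M, supp M s f -> supp M t f -> is_union u s t -> supp M u f) /\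
  (forall s t u : state M, anti M s f -> anti M t f -> is_union u s t -> anti M u f).
Proof.
  induction f as [p|g IH|g IHg h IHh|g IHg h IHh|g IH|]; intros M; simpl.
  - split; intros s t u Hs Ht Hu w Hw; apply Hu in Hw; destruct Hw; auto.
  - destruct (IH M) as [A B]; split; eauto.
  - destruct (IHg M) as [Ag Bg]; destruct (IHh M) as [Ah Bh]; split.
    + intros s t u [H1 H2] [H3 H4] Hu; split; eauto.
    + intros s t u [s1 [s2 [Hs [H1 H2]]]] [t1 [t2 [Ht [H3 H4]]]] Hu.
      exists (fun w => s1 w \/ t1 w), (fun w => s2 w \/ t2 w).
      split; [|split].
      * intro w; pose proof (Hu w); pose proof (Hs w); pose proof (Ht w); tauto.
      * eapply Bg; [exact H1|exact H3|intro; tauto].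
      * eapply Bh; [exact H2|exact H4|intro; tauto].
  - destruct (IHg M) as [Ag Bg]; destruct (IHh M) as [Ah Bh]; split.
    + intros s t u [s1 [s2 [Hs [H1 H2]]]] [t1 [t2 [Ht [H3 H4]]]] Hu.
      exists (fun w => s1 w \/ t1 w), (fun w => s2 w \/ t2 w).
      split; [|split].
      * intro w; pose proof (Hu w); pose proof (Hs w); pose proof (Ht w); tauto.
      * eapply Ag; [exact H1|exact H3|intro; tauto].
      * eapply Ah; [exact H2|exact H4|intro; tauto].
    + intros s t u [H1 H2] [H3 H4] Hu; split; eauto.
  - split; intros s t u Hs Ht Hu w Hw; apply Hu in Hw; destruct Hw; auto.
  - split.
    + intros s t u [w Hw] _ Hu; exists w; apply Hu; auto.
    + intros s t u Hs Ht Hu w Hw; apply Hu in Hw; destruct Hw as [Hw|Hw];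
        [apply (Hs w)|apply (Ht w)]; exact Hw.
Qed.

Lemma convex (f : form) : forall (M : model),
  (forall s t u : state M, supp M t f -> supp M s f -> subset t u -> subset u s -> supp M u f) /\
  (forall s t u : state M, anti M t f -> anti M s f -> subset t u -> subset u s -> anti M u f).
Proof.
  induction f as [p|g IH|g IHg h IHh|g IHg h IHh|g IH|]; intros M; simpl.
  - split; intros s t u Ht Hs Htu Hus w Hw; auto.
  - destruct (IH M) as [A B]; split; eauto.
  - destruct (IHg M) as [Ag Bg]; destruct (IHh M) as [Ah Bh]; split.
    + intros s t u [H1 H2] [H3 H4] Htu Hus; split; eauto.
    + intros s t u [t1 [t2 [Ht [H1 H2]]]] [s1 [s2 [Hs [H3 H4]]]] Htu Hus.
      destruct (union_closed g M) as [_ Ug]; destruct (union_closed h M) as [_ Uh].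
      exists (fun w => u w /\ (t1 w \/ s1 w)), (fun w => u w /\ (t2 w \/ s2 w)).
      split; [|split].
      * intro w; split.
        -- intro Hw. pose proof (Hus w Hw) as Hw'. apply Hs in Hw'. tauto.
        -- intros [[? _]|[? _]]; auto.
      * eapply Bg with (s := fun w => t1 w \/ s1 w); [exact H1| |intros w Hw; split; [apply Htu, Ht; tauto|tauto]|intros w Hw; tauto].
        eapply Ug; [exact H1|exact H3|intro; tauto].
      * eapply Bh with (s := fun w => t2 w \/ s2 w); [exact H2| |intros w Hw; split; [apply Htu, Ht; tauto|tauto]|intros w Hw; tauto].
        eapply Uh; [exact H2|exact H4|intro; tauto].
  - destruct (IHg M) as [Ag Bg]; destruct (IHh M) as [Ah Bh]; split.
    + intros s t u [t1 [t2 [Ht [H1 H2]]]] [s1 [s2 [Hs [H3 H4]]]] Htu Hus.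
      destruct (union_closed g M) as [Ug _]; destruct (union_closed h M) as [Uh _].
      exists (fun w => u w /\ (t1 w \/ s1 w)), (fun w => u w /\ (t2 w \/ s2 w)).
      split; [|split].
      * intro w; split.
        -- intro Hw. pose proof (Hus w Hw) as Hw'. apply Hs in Hw'. tauto.
        -- intros [[? _]|[? _]]; auto.
      * eapply Ag with (s := fun w => t1 w \/ s1 w); [exact H1| |intros w Hw; split; [apply Htu, Ht; tauto|tauto]|intros w Hw; tauto].
        eapply Ug; [exact H1|exact H3|intro; tauto].
      * eapply Ah with (s := fun w => t2 w \/ s2 w); [exact H2| |intros w Hw; split; [apply Htu, Ht; tauto|tauto]|intros w Hw; tauto].
        eapply Uh; [exact H2|exact H4|intro; tauto].
    + intros s t u [H1 H2] [H3 H4] Htu Hus; split; eauto.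
  - split; intros s t u Ht Hs Htu Hus w Hw; auto.
  - split.
    + intros s t u [w Hw] _ Htu _; exists w; auto.
    + intros s t u Ht Hs Htu Hus w Hw; apply (Hs w); auto.
Qed.

Theorem lemma3p18 (phi : form) :
  empty_state_property phi -> downward_closed phi.
Proof.
  intros He M s t Hs Hts.
  destruct (convex phi M) as [C _].
  apply (C s (empty_state M) t (He M) Hs); [intros w []|exact Hts].
Qed.
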